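(* Let $s\ge1$ be an integer, let $p$ be a prime, and let $n=p^k$ with $k\ge 2s$. Let $G=\langle p^{k-s}+1\rangle$ be the subgroup of $\mathbb{Z}_n^\times$ generated by $p^{k-s}+1$. Then the coset index function $f_G$ is a $$\left(p^k,\ (sp+p-s)p^{k-s-1},\ \bigcup_{i=0}^{s-1}\Big\{0,\ \sum_{j=0}^{i}\varphi(p^{k-j})\Big\}\right)$$ zero-difference function, where $\varphi$ is Euler's totient function.
   Context: For a subgroup $G$ of $\mathbb{Z}_n^\times$ and $r\in\mathbb{Z}_n$, the coset $rG=\{rg\mid g\in G\}$; these cosets partition $\mathbb{Z}_n$, forming a set $D_G$. The coset index function induced by $G$ is $f_G:\mathbb{Z}_n\to\mathbb{Z}_{|D_G|}$, $f_G(x)=h_G(C_x)$, where $C_x$ is the coset containing $x$ and $h_G:D_G\to\mathbb{Z}_{|D_G|}$ is a fixed bijection. A function $f:A\to B$ between finite abelian groups is an $(n,m,S)$ zero-difference function if $n=|A|$, $m=|f(A)|$, and for every nonzero $a\in A$, $|\{x\in A\mid f(x+a)=f(x)\}|\in S$. Here $A=(\mathbb{Z}_n,+)$. *)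

(* Defs.v *)
From HB Require Import structures.
From mathcomp Require Import all_boot all_order all_algebra.
Set Implicit Arguments. Unset Strict Implicit. Unset Printing Implicit Defensive.
Import GRing.Theory.
Local Open Scope ring_scope.

(* Cyclic subgroup <g> of Z_n^x generated by a unit g : 'Z_n, as a set of
   residues: { g^i }.  Since g is a unit, g^ord(g) = 1 with ord(g) <= n,
   so exponents i <= n already give the whole subgroup. *)
Definition cyc_subgroup (n : nat) (g : 'Z_n) : {set 'Z_n} :=
  [set g ^+ (nat_of_ord i) | i : 'I_n.+1].

Definition coset_of_Zn (n : nat) (G : {set 'Z_n}) (r : 'Z_n) : {set 'Z_n} :=
  [set r * x | x in G].

Definition cosets_Zn (n : nat) (G : {set 'Z_n}) : {set {set 'Z_n}} :=
  [set coset_of_Zn G r | r : 'Z_n].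

Definition coset_index_fun (n : nat) (G : {set 'Z_n})
  (h : {set 'Z_n} -> 'I_#|cosets_Zn G|) : 'Z_n -> 'I_#|cosets_Zn G| :=
  fun x => h (coset_of_Zn G x).

Definition zero_difference_fun (A : finZmodType) (B : finType) (f : A -> B)
  (N M : nat) (S : pred nat) : Prop :=
  [/\ N = #|A|, M = #|[set f x | x : A]|
    & forall a : A, a != 0 -> #|[set x : A | f (x + a) == f x]| \in S].

(* Main.v *)
Require Import Defs.
From HB Require Import structures.
From mathcomp Require Import all_boot all_order all_algebra.
From mathcomp Require Import zify.
Set Implicit Arguments. Unset Strict Implicit. Unset Printing Implicit Defensive.

Lemma dvd_sub_mod (n E x y : nat) : E %| n -> x <= n ->
  (E %| (y + (n - x)) %% n) = (y %% E == x %% E).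
Proof.
move=> HE Hx.
rewrite {1}/dvdn modn_dvdm // -/(dvdn _ _) addnBA // -eqn_mod_dvd; last first.
  exact: leq_trans Hx (leq_addl _ _).
by rewrite -modnDmr (eqP HE) addn0.
Qed.

Lemma card_modclass (m E r : nat) : 0 < E -> E %| m -> r < E ->
  #|[set y : 'I_m | y %% E == r]| = m %/ E.
Proof.
move=> E0 Em rE.
have aux : forall i, i < m %/ E -> i * E + r < m.
  move=> i Hi; apply: (@leq_trans (i * E + E)); first by rewrite ltn_add2l.
  by rewrite -mulSnr -[X in _ <= X](divnK Em) leq_mul2r Hi orbT.
pose F (i : 'I_(m %/ E)) : 'I_m := Ordinal (aux _ (ltn_ord i)).
have -> : [set y : 'I_m | y %% E == r] = F @: setT.
  apply/setP => y; rewrite inE; apply/eqP/imsetP.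
    move=> Hy; have Hl : y %/ E < m %/ E.
      by rewrite ltn_divLR // divnK.
    exists (Ordinal Hl) => //; apply: val_inj => /=.
    by rewrite -Hy -divn_eq.
  move=> [i _ ->] /=; by rewrite modnMDl modn_small.
rewrite card_imset ?cardsT ?card_ord //.
move=> i j /(congr1 val) /= /eqP; rewrite eqn_add2r eqn_mul2r eqn0Ngt E0 /=.
by move/eqP => H; apply: val_inj.
Qed.

Lemma gcd_pow (p y s : nat) : prime p ->
  exists2 t, t <= s & gcdn y (p ^ s) = p ^ t /\
    forall j, j <= s -> (p ^ j %| y) = (j <= t).
Proof.
move=> pp; have p1 := prime_gt1 pp.
have /(@dvdn_pfactor p _ s pp) [t ts Ht] := dvdn_gcdr y (p ^ s).
exists t => //; split => // j js.
have -> : (p ^ j %| y) = (p ^ j %| gcdn y (p ^ s)).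
  by rewrite dvdn_gcd dvdn_Pexp2l // js andbT.
by rewrite Ht dvdn_Pexp2l.
Qed.

Lemma tele1 (p t s : nat) : 0 < p ->
  \sum_(j < s) (j < t) * (p ^ j.+1 - p ^ j) = p ^ (minn t s) - 1.
Proof.
move=> p0; elim: s => [|s IH]; first by rewrite big_ord0 minn0 expn0.
rewrite big_ord_recr /= IH.
have h1 : forall a, 1 <= p ^ a by move=> a; rewrite expn_gt0 p0.
have h2 : forall a, p ^ a <= p ^ a.+1 by move=> a; rewrite expnS leq_pmull.
case: (ltnP s t) => Hst.
  have -> : minn t s.+1 = s.+1 by apply/minn_idPr.
  by rewrite mul1n; have := h1 s; have := h2 s; lia.
have -> : minn t s.+1 = t by apply/minn_idPl; apply: leqW.
by rewrite mul0n addn0.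
Qed.

Lemma gcd_expand (p y s : nat) : prime p ->
  gcdn y (p ^ s) = 1 + \sum_(j < s) (p ^ j.+1 %| y) * (p ^ j.+1 - p ^ j).
Proof.
move=> pp; have [t ts [Ht Hj]] := gcd_pow y s pp.
have -> : \sum_(j < s) (p ^ j.+1 %| y) * (p ^ j.+1 - p ^ j) =
          \sum_(j < s) (j < t) * (p ^ j.+1 - p ^ j).
  by apply: eq_bigr => j _; rewrite Hj.
rewrite tele1 ?prime_gt0 // Ht.
have -> : minn t s = t by apply/minn_idPl.
by rewrite addnC subnK // expn_gt0 prime_gt0.
Qed.

Lemma count_div (p k m e : nat) : prime p -> m = p ^ k -> e <= k ->
  #|[set y : 'I_m | p ^ e %| y]| = p ^ (k - e).
Proof.
move=> pp Hm ek.
have E0 : 0 < p ^ e by rewrite expn_gt0 prime_gt0.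
have Ed : p ^ e %| m by rewrite Hm dvdn_Pexp2l ?prime_gt1.
have := card_modclass E0 Ed E0; rewrite /dvdn => ->.
by rewrite Hm -expnB ?prime_gt0.
Qed.

Lemma sum_bool_card (T : finType) (b : pred T) : \sum_(y : T) (b y : nat) = #|[set y | b y]|.
Proof. by rewrite -sum1dep_card [RHS]big_mkcond; apply: eq_bigr => y _; case: (b y). Qed.

Lemma sum_gcd (p k s m : nat) : prime p -> m = p ^ k -> s < k ->
  \sum_(y : 'I_m) gcdn y (p ^ s) = p ^ k.-1 * (s * p + p - s).
Proof.
move=> pp Hm sk; have p1 := prime_gt1 pp.
under eq_bigr => y _ do rewrite (gcd_expand y s pp).
rewrite big_split /= sum1_card card_ord exchange_big /=.
have -> : \sum_(j < s) \sum_(i < m) (p ^ j.+1 %| i) * (p ^ j.+1 - p ^ j) =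
          \sum_(j < s) (p ^ k - p ^ k.-1).
  apply: eq_bigr => j _; have js := ltn_ord j.
  rewrite -big_distrl /= sum_bool_card (count_div pp Hm); last by lia.
  have E1 : p ^ j.+1 = p * p ^ j by rewrite expnS.
  have E2 : p ^ k = p ^ j.+1 * p ^ (k - j.+1) by rewrite -expnD subnKC //; lia.
  have E3 : p ^ k.-1 = p ^ j * p ^ (k - j.+1) by rewrite -expnD; congr (_ ^ _); lia.
  rewrite E2 E3 E1; set a := p ^ j; set b := p ^ (k - j.+1).
  by rewrite mulnC mulnBl.
rewrite big_const_ord iter_addn_0 Hm.
have E : p ^ k = p * p ^ k.-1 by rewrite -expnS prednK //; lia.
rewrite E; set P := p ^ k.-1.
have Pp : 0 < P by rewrite expn_gt0 prime_gt0.
nia.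
Qed.

Lemma tot_pow (p e : nat) : prime p -> 0 < e -> totient (p ^ e) = p ^ e - p ^ e.-1.
Proof.
move=> pp e0; rewrite totient_pfactor //.
have -> : p ^ e = p * p ^ e.-1 by rewrite -expnS prednK.
by rewrite -subn1 mulnBl mul1n.
Qed.

Lemma tele_tot (p k i : nat) : prime p -> i < k ->
  \sum_(j < i.+1) totient (p ^ (k - j)) = p ^ k - p ^ (k - i.+1).
Proof.
move=> pp; elim: i => [|i IH] ik.
  by rewrite big_ord1 subn0 tot_pow ?subn1 //; lia.
rewrite big_ord_recr /= IH; last by lia.
rewrite tot_pow //; last by lia.
have -> : (k - i.+1).-1 = k - i.+2 by lia.
have h1 : p ^ (k - i.+1) = p * p ^ (k - i.+2) by rewrite -expnS; congr (_ ^ _); lia.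
have h2 : p ^ (k - i.+1) <= p ^ k by rewrite leq_pexp2l ?prime_gt0 //; lia.
have h3 := prime_gt1 pp.
rewrite h1 in h2 *; set P := p ^ (k - i.+2) in h1 h2 *; nia.
Qed.

Import GRing.Theory.
Local Open Scope ring_scope.

Lemma valZ_lt (m : nat) (Hm : (1 < m)%N) (x : 'Z_m) : (nat_of_ord x < m)%N.
Proof. by have := ltn_ord x; rewrite [X in (_ < X)%N -> _]Zp_cast. Qed.

Lemma valZ_nat (m : nat) (Hm : (1 < m)%N) (x : 'Z_m) : x = (nat_of_ord x)%:R.
Proof. by rewrite natr_Zp. Qed.

Lemma valZ_mul (m : nat) (Hm : (1 < m)%N) (x y : 'Z_m) :
  nat_of_ord (x * y) = (nat_of_ord x * nat_of_ord y %% m)%N.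
Proof. by rewrite {1}(valZ_nat Hm x) {1}(valZ_nat Hm y) -natrM val_Zp_nat. Qed.

Lemma valZ_sub (m : nat) (Hm : (1 < m)%N) (x y : 'Z_m) :
  nat_of_ord (y - x) = ((nat_of_ord y + (m - nat_of_ord x)) %% m)%N.
Proof.
have -> : y - x = (nat_of_ord y + (m - nat_of_ord x))%:R.
  rewrite natrD {1}(valZ_nat Hm y); congr (_ + _).
  have Hx := ltnW (valZ_lt Hm x).
  have E : (m%:R : 'Z_m) = (m - x)%:R + x.
    by rewrite {2}(valZ_nat Hm x) -natrD subnK.
  by rewrite -[LHS]add0r -(pchar_Zp Hm) E addrK.
by rewrite val_Zp_nat.
Qed.

Lemma valZ_inj (m : nat) (x y : 'Z_m) : nat_of_ord x = nat_of_ord y -> x = y.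
Proof. exact: val_inj. Qed.

Lemma mem_ideal (m : nat) (Hm : (1 < m)%N) (c y : 'Z_m) :
  (exists a : 'Z_m, y = a * c) <-> (gcdn (nat_of_ord c) m %| nat_of_ord y)%N.
Proof.
split.
  move=> [a ->]; rewrite valZ_mul //.
  rewrite /dvdn modn_dvdm ?dvdn_gcdr //.
  by rewrite -/(dvdn _ _) dvdn_mull ?dvdn_gcdl.
move=> Hd.
have [c0|cpos] := posnP (nat_of_ord c).
  move: Hd; rewrite c0 gcd0n => Hd.
  have y0 : nat_of_ord y = 0%N.
    apply/eqP; apply: contraTT (valZ_lt Hm y) => Hy.
    by rewrite -leqNgt dvdn_leq // lt0n.
  exists 0; rewrite mul0r; exact: val_inj.
case: (egcdnP m cpos) => km kn Hk _.
exists (((nat_of_ord y %/ gcdn (nat_of_ord c) m) * km)%N%:R).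
apply: valZ_inj; rewrite valZ_mul // val_Zp_nat //.
rewrite modnMml -mulnA Hk mulnDr mulnA modnMDl.
by rewrite divnK // modn_small // valZ_lt.
Qed.

Lemma n_gt1 (p k s : nat) : (1 <= s)%N -> prime p -> (2 * s <= k)%N -> (1 < p ^ k)%N.
Proof.
move=> s1 pp sk; have p1 := prime_gt1 pp.
by rewrite -(expn0 p) ltn_exp2l //; lia.
Qed.

Lemma qq (p k s : nat) : (1 <= s)%N -> prime p -> (2 * s <= k)%N ->
  ((p ^ (k - s))%:R * (p ^ (k - s))%:R = 0 :> 'Z_(p ^ k)).
Proof.
move=> s1 pp sk; rewrite -natrM -expnD.
have -> : (k - s + (k - s) = k + (k - 2 * s))%N by lia.
by rewrite expnD natrM pchar_Zp ?mul0r // (n_gt1 s1 pp sk).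
Qed.

Lemma gpow (p k s : nat) : (1 <= s)%N -> prime p -> (2 * s <= k)%N -> forall i : nat,
  ((p ^ (k - s) + 1)%:R : 'Z_(p ^ k)) ^+ i = 1 + i%:R * (p ^ (k - s))%:R.
Proof.
move=> s1 pp sk; elim=> [|i IH]; first by rewrite expr0 mulr0n mul0r addr0.
rewrite exprSr IH natrD mulrDl mul1r mulrDr mulr1 -mulrA qq // mulr0 add0r.
by rewrite -[i.+1]addn1 natrD mulrDl mul1r [_ + 1]addrC -addrA [(p ^ (k - s))%:R + _]addrC.
Qed.

Lemma cycG (p k s : nat) : (1 <= s)%N -> prime p -> (2 * s <= k)%N ->
  cyc_subgroup ((p ^ (k - s) + 1)%:R : 'Z_(p ^ k)) =
  [set 1 + a * (p ^ (k - s))%:R | a : 'Z_(p ^ k)].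
Proof.
move=> s1 pp sk; have n1 := n_gt1 s1 pp sk.
apply/setP => y; apply/imsetP/imsetP.
  by move=> [i _ ->]; exists (nat_of_ord i)%:R => //; rewrite gpow.
move=> [a _ ->]; exists (inord (nat_of_ord a) : 'I_(p ^ k).+1) => //.
rewrite gpow // inordK; first by rewrite -(valZ_nat n1).
by apply: leqW; apply: valZ_lt.
Qed.

Definition Ef (p k s : nat) (x : 'Z_(p ^ k)) : nat := (p ^ (k - s) * gcdn x (p ^ s))%N.

Lemma coset_mem (p k s : nat) : (1 <= s)%N -> prime p -> (2 * s <= k)%N ->
  forall x y : 'Z_(p ^ k),
  (y \in coset_of_Zn [set 1 + a * (p ^ (k - s))%:R | a : 'Z_(p ^ k)] x) =
  (Ef s x %| nat_of_ord (y - x)%R)%N.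
Proof.
move=> s1 pp sk x y; have n1 := n_gt1 s1 pp sk.
set q := (p ^ (k - s))%:R : 'Z_(p ^ k).
have -> : Ef s x = gcdn (nat_of_ord (x * q)) (p ^ k).
  rewrite valZ_mul // val_Zp_nat // gcdn_modl modn_small; last first.
    by rewrite ltn_exp2l ?prime_gt1 //; lia.
  have E : (p ^ k = p ^ (k - s) * p ^ s)%N by rewrite -expnD subnK //; lia.
  rewrite [X in gcdn _ X]E.
  by rewrite /Ef muln_gcdr mulnC.
apply/idP/idP.
  move=> /imsetP [z /imsetP [a _ ->] ->]; apply/mem_ideal => //; exists a.
  by rewrite mulrDr mulr1 addrC addKr mulrCA.
move=> /mem_ideal [] // a Ha; apply/imsetP; exists (1 + a * q).
  by apply/imsetP; exists a.
by rewrite mulrDr mulr1 mulrCA -Ha addrC subrK.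
Qed.
Notation GQ p k s := ([set 1 + a * (p ^ (k - s))%:R | a : 'Z_(p ^ k)]).

Lemma coset_self (p k s : nat) (x : 'Z_(p ^ k)) : x \in coset_of_Zn (GQ p k s) x.
Proof.
apply/imsetP; exists 1; last by rewrite mulr1.
by apply/imsetP; exists 0; rewrite ?mul0r ?addr0.
Qed.

Lemma prodG (p k s : nat) : (1 <= s)%N -> prime p -> (2 * s <= k)%N ->
  forall b c : 'Z_(p ^ k),
  (1 + b * (p ^ (k - s))%:R) * (1 + c * (p ^ (k - s))%:R) = 1 + (b + c) * (p ^ (k - s))%:R.
Proof.
move=> s1 pp sk b c; set q := (p ^ (k - s))%:R : 'Z_(p ^ k).
have Hq : q * q = 0 by apply: qq.
rewrite mulrDl mul1r mulrDr mulr1 mulrACA Hq mulr0 addr0 mulrDl.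
by rewrite -addrA [c * q + _]addrC.
Qed.

Lemma coset_eq (p k s : nat) : (1 <= s)%N -> prime p -> (2 * s <= k)%N ->
  forall x y : 'Z_(p ^ k), y \in coset_of_Zn (GQ p k s) x ->
  coset_of_Zn (GQ p k s) y = coset_of_Zn (GQ p k s) x.
Proof.
move=> s1 pp sk x y /imsetP [z /imsetP [b _ ->] ->].
apply/setP => w; apply/imsetP/imsetP.
  move=> [z' /imsetP [a _ ->] ->]; exists (1 + (b + a) * (p ^ (k - s))%:R).
    by apply/imsetP; exists (b + a).
  by rewrite -mulrA prodG.
move=> [z' /imsetP [a _ ->] ->]; exists (1 + (a - b) * (p ^ (k - s))%:R).
  by apply/imsetP; exists (a - b).
by rewrite -mulrA prodG // [b + _]addrC subrK.
Qed.

Lemma coset_eqE (p k s : nat) : (1 <= s)%N -> prime p -> (2 * s <= k)%N ->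
  forall x y : 'Z_(p ^ k),
  (coset_of_Zn (GQ p k s) x == coset_of_Zn (GQ p k s) y) = (y \in coset_of_Zn (GQ p k s) x).
Proof.
move=> s1 pp sk x y; apply/eqP/idP.
  by move=> ->; apply: coset_self.
by move=> H; rewrite (coset_eq s1 pp sk H).
Qed.

Lemma Ef_dvd (p k s : nat) : (1 <= s)%N -> prime p -> (2 * s <= k)%N ->
  forall x : 'Z_(p ^ k), (0 < Ef s x)%N /\ (Ef s x %| p ^ k)%N.
Proof.
move=> s1 pp sk x; split.
  have Hps : (0 < p ^ s)%N by rewrite expn_gt0 prime_gt0.
  by rewrite /Ef muln_gt0 expn_gt0 prime_gt0 //= gcdn_gt0 Hps orbT.
have E : (p ^ k = p ^ (k - s) * p ^ s)%N by rewrite -expnD subnK //; lia.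
by rewrite [X in (_ %| X)%N]E /Ef dvdn_pmul2l ?expn_gt0 ?prime_gt0 ?dvdn_gcdr.
Qed.

Lemma coset_modE (p k s : nat) : (1 <= s)%N -> prime p -> (2 * s <= k)%N ->
  forall x : 'Z_(p ^ k),
  coset_of_Zn (GQ p k s) x = [set y : 'Z_(p ^ k) | (y %% Ef s x == x %% Ef s x)%N].
Proof.
move=> s1 pp sk x; have n1 := n_gt1 s1 pp sk.
have [E0 En] := Ef_dvd s1 pp sk x.
apply/setP => y; rewrite inE coset_mem // valZ_sub // dvd_sub_mod //.
exact: ltnW (valZ_lt n1 x).
Qed.

Lemma card_coset (p k s : nat) : (1 <= s)%N -> prime p -> (2 * s <= k)%N ->
  forall x : 'Z_(p ^ k),
  #|coset_of_Zn (GQ p k s) x| = (p ^ k %/ Ef s x)%N.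
Proof.
move=> s1 pp sk x; have n1 := n_gt1 s1 pp sk.
have [E0 En] := Ef_dvd s1 pp sk x.
rewrite coset_modE //.
rewrite card_modclass //; first by rewrite Zp_cast.
  by rewrite Zp_cast.
by rewrite ltn_mod.
Qed.

Lemma divn_inj (n E1 E2 : nat) : (0 < n)%N -> (E1 %| n)%N -> (E2 %| n)%N ->
  (n %/ E1 = n %/ E2)%N -> E1 = E2.
Proof.
move=> n0 H1 H2 Hq.
have c0 : (0 < n %/ E1)%N.
  by rewrite lt0n; apply/eqP => H; move: (divnK H1); rewrite H mul0n => H'; move: n0; rewrite -H'.
apply/eqP; rewrite -(eqn_pmul2l c0); apply/eqP.
by rewrite [in RHS]Hq mulnC divnK // mulnC divnK.
Qed.

Lemma gcd_const (p k s : nat) : (1 <= s)%N -> prime p -> (2 * s <= k)%N ->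
  forall x i : 'Z_(p ^ k), i \in coset_of_Zn (GQ p k s) x ->
  gcdn i (p ^ s) = gcdn x (p ^ s).
Proof.
move=> s1 pp sk x i Hi; have n1 := n_gt1 s1 pp sk.
have Hc := coset_eq s1 pp sk Hi.
have : #|coset_of_Zn (GQ p k s) i| = #|coset_of_Zn (GQ p k s) x| by rewrite Hc.
rewrite !card_coset // => /divn_inj.
have [_ Ei] := Ef_dvd s1 pp sk i; have [_ Ex] := Ef_dvd s1 pp sk x.
move=> /(_ (ltnW n1) Ei Ex); rewrite /Ef => /eqP.
by rewrite eqn_pmul2l ?expn_gt0 ?prime_gt0 // => /eqP.
Qed.

Lemma card_cosets (p k s : nat) : (1 <= s)%N -> prime p -> (2 * s <= k)%N ->
  #|cosets_Zn (GQ p k s)| = ((s * p + p - s) * p ^ (k - s - 1))%N.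
Proof.
move=> s1 pp sk; have n1 := n_gt1 s1 pp sk.
set C := cosets_Zn (GQ p k s).
have key : (\sum_(y : 'Z_(p ^ k)) gcdn y (p ^ s))%N = (#|C| * p ^ s)%N.
  have -> : (\sum_(y : 'Z_(p ^ k)) gcdn y (p ^ s) =
      \sum_(y in [set: 'Z_(p ^ k)]) gcdn y (p ^ s))%N.
    by apply: eq_bigl => y; rewrite inE.
  rewrite (partition_big_imset (fun y => coset_of_Zn (GQ p k s) y)) /=.
  have -> : [set coset_of_Zn (GQ p k s) x | x in [set: 'Z_(p ^ k)]] = C.
    by apply/setP => B; apply/imsetP/imsetP => [[x _ ->]|[x _ ->]]; exists x.
  rewrite -sum_nat_const; apply: eq_bigr => B /imsetP [x _ ->].
  rewrite (eq_bigl (fun i => i \in coset_of_Zn (GQ p k s) x)); last first.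
    by move=> i; rewrite inE /= eq_sym coset_eqE.
  rewrite (eq_bigr (fun _ => gcdn x (p ^ s))); last by move=> i Hi; apply: gcd_const.
  rewrite sum_nat_const card_coset // /Ef.
  have E : (p ^ k = p ^ (k - s) * p ^ s)%N by rewrite -expnD subnK //; lia.
  rewrite [X in (X %/ _)%N]E divnMl ?expn_gt0 ?prime_gt0 // divnK // dvdn_gcdr.
  done.
have := sum_gcd pp (Zp_cast n1) (_ : s < k)%N; rewrite key => /(_ ltac:(lia)) H.
apply/eqP; rewrite -(eqn_pmul2r (_ : 0 < p ^ s)%N) ?expn_gt0 ?prime_gt0 //.
rewrite H -mulnA -expnD mulnC; apply/eqP; congr (_ * p ^ _)%N; lia.
Qed.

Lemma zd_count (p k s : nat) : (1 <= s)%N -> prime p -> (2 * s <= k)%N ->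
  forall a : 'Z_(p ^ k), a != 0 ->
  (#|[set x : 'Z_(p ^ k) | (x + a)%R \in coset_of_Zn (GQ p k s) x]| == 0)%N ||
  [exists i : 'I_s, #|[set x : 'Z_(p ^ k) | (x + a)%R \in coset_of_Zn (GQ p k s) x]|
     == (\sum_(j < i.+1) totient (p ^ (k - j)))%N].
Proof.
move=> s1 pp sk a Ha; have n1 := n_gt1 s1 pp sk.
have a0 : (0 < nat_of_ord a)%N.
  rewrite lt0n; apply: contra Ha => /eqP H; apply/eqP; exact: val_inj.
have [t tk [Ht Hja]] := gcd_pow (nat_of_ord a) k pp.
have tk' : (t < k)%N.
  rewrite ltnNge; apply/negP => kt.
  have := Hja k (leqnn k); rewrite kt => /(dvdn_leq a0).
  by rewrite leqNgt valZ_lt.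
have Hset : [set x : 'Z_(p ^ k) | x + a \in coset_of_Zn (GQ p k s) x] =
            [set x : 'Z_(p ^ k) | (Ef s x %| nat_of_ord a)%N].
  by apply/setP => x; rewrite !inE coset_mem // [x + a]addrC addrK.
have Hx : forall x : 'Z_(p ^ k), exists2 tx, (tx <= s)%N &
    (Ef s x %| nat_of_ord a)%N = (k - s + tx <= t)%N /\
    forall j, (j <= s)%N -> (p ^ j %| x)%N = (j <= tx)%N.
  move=> x; have [tx txs [Htx Hjx]] := gcd_pow (nat_of_ord x) s pp.
  exists tx => //; split => //.
  by rewrite /Ef Htx -expnD Hja //; lia.
rewrite Hset.
case: (ltnP t (k - s)) => Hts.
  apply/orP; left; rewrite cards_eq0; apply/eqP/setP => x; rewrite !inE.
  have [tx _ [-> _]] := Hx x; apply/negP; lia.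
set i := (t - (k - s))%N.
have is_ : (i < s)%N by rewrite /i; lia.
have -> : [set x : 'Z_(p ^ k) | (Ef s x %| nat_of_ord a)%N] =
          ~: [set x : 'Z_(p ^ k) | (p ^ i.+1 %| x)%N].
  apply/setP => x; rewrite !inE; have [tx txs [-> Hj]] := Hx x.
  rewrite Hj; last by lia.
  by apply/idP/idP; lia.
apply/orP; right; apply/existsP; exists (Ordinal is_) => /=.
rewrite tele_tot //; last by lia.
have := cardsC [set x : 'Z_(p ^ k) | (p ^ i.+1 %| x)%N].
rewrite (count_div pp (Zp_cast n1)); last by lia.
have cT : #|'Z_(p ^ k)| = (p ^ k)%N by rewrite card_ord Zp_cast.
rewrite cT => Hc.
by rewrite -[X in _ == (X - _)%N]Hc addKn.
Qed.

Theorem theorem3p7 (s p k : nat) :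
  (1 <= s)%N -> prime p -> (2 * s <= k)%N ->
  let n := (p ^ k)%N in
  let G := cyc_subgroup ((p ^ (k - s) + 1)%:R : 'Z_n) in
  forall h : {set 'Z_n} -> 'I_#|cosets_Zn G|,
    {in cosets_Zn G &, injective h} ->
    zero_difference_fun (coset_index_fun h)
      (p ^ k)%N
      ((s * p + p - s) * p ^ (k - s - 1))%N
      (fun v : nat => (v == 0)%N ||
         [exists i : 'I_s, v == (\sum_(j < i.+1) totient (p ^ (k - j)))%N]).
Proof.
move=> s1 pp sk n G h hinj.
have n1 := n_gt1 s1 pp sk.
have HG : G = GQ p k s := cycG s1 pp sk.
split.
- by rewrite card_ord Zp_cast.
- rewrite /coset_index_fun.
  have -> : [set h (coset_of_Zn G x) | x : 'Z_n] = [set h B | B in cosets_Zn G].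
    apply/setP => y; apply/imsetP/imsetP => [[x _ ->]|[B /imsetP [x _ ->] ->]].
      by exists (coset_of_Zn G x) => //; apply/imsetP; exists x.
    by exists x.
  by rewrite card_in_imset // HG card_cosets.
- move=> a Ha.
  have -> : [set x : 'Z_n | coset_index_fun h (x + a) == coset_index_fun h x] =
            [set x : 'Z_(p ^ k) | (x + a)%R \in coset_of_Zn (GQ p k s) x].
    apply/setP => x; rewrite !inE /coset_index_fun.
    have -> : (h (coset_of_Zn G (x + a)) == h (coset_of_Zn G x)) =
              (coset_of_Zn G (x + a) == coset_of_Zn G x).
      apply/eqP/eqP => [/hinj|->] //; apply.
        by apply/imsetP; exists (x + a).
      by apply/imsetP; exists x.
    by rewrite HG eq_sym coset_eqE.
  exact: zd_count.
Qed.
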